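(* Let $L$ be a simple Lie algebra over a field $K$ of characteristic $\neq 2$ such that $\mathrm{HomLie}(L)$ is closed with respect to the anticommutator $\varphi * \psi = \frac12(\varphi\circ\psi+\psi\circ\varphi)$. Then either $\mathrm{HomLie}(L) = \mathrm{Cent}(L)$, or $L$ is isomorphic to a subalgebra of the Lie algebra $\mathrm{Der}(\mathrm{HomLie}(L))$ of derivations of the Jordan algebra $(\mathrm{HomLie}(L), * )$.
   Context: A Hom-Lie structure on a Lie algebra $L$ is a linear map $\varphi: L \to L$ satisfying $[[x,y],\varphi(z)] + [[z,x],\varphi(y)] + [[y,z],\varphi(x)] = 0$ for all $x,y,z \in L$; $\mathrm{HomLie}(L)$ is the space of all of them. The centroid $\mathrm{Cent}(L)$ is the space of linear maps $\varphi: L\to L$ with $\varphi([x,y]) = [\varphi(x),y]$ for all $x,y \in L$. *)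

(* Defs.v *)
(* Lie algebras over a field K, possibly infinite-dimensional:
   the underlying K-vector space is an lmodType K and the bracket is a map br. *)
From mathcomp Require Import all_boot all_algebra.
Set Implicit Arguments. Unset Strict Implicit. Unset Printing Implicit Defensive.
Import GRing.Theory.
Local Open Scope ring_scope.

Section LieDefs.
Variables (K : fieldType) (V : lmodType K).

Definition is_lin (f : V -> V) : Prop :=
  forall (a : K) (u v : V), f (a *: u + v) = a *: f u + f v.

Definition lie_algebra (br : V -> V -> V) : Prop :=
  [/\ (forall (a : K) x y z, br (a *: x + y) z = a *: br x z + br y z),
      (forall (a : K) x y z, br z (a *: x + y) = a *: br z x + br z y),
      (forall x, br x x = 0) &
      (forall x y z, br x (br y z) + br y (br z x) + br z (br x y) = 0)].

Definition lie_ideal (br : V -> V -> V) (I : V -> Prop) : Prop :=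
  [/\ I 0,
      (forall (a : K) x y, I x -> I y -> I (a *: x + y)) &
      (forall x y, I x -> I (br y x))].

Definition simple_lie (br : V -> V -> V) : Prop :=
  [/\ lie_algebra br,
      (exists x y, br x y != 0) &
      (forall I, lie_ideal br I -> (forall x, I x -> x = 0) \/ (forall x, I x))].

Definition homlie (br : V -> V -> V) (phi : V -> V) : Prop :=
  is_lin phi /\
  forall x y z, br (br x y) (phi z) + br (br z x) (phi y) + br (br y z) (phi x) = 0.

Definition centroid (br : V -> V -> V) (phi : V -> V) : Prop :=
  is_lin phi /\ forall x y, phi (br x y) = br (phi x) y.

Definition jprod (phi psi : V -> V) : V -> V :=
  fun v => (2%:R : K)^-1 *: (phi (psi v) + psi (phi v)).

Definition homlie_jordan_der (br : V -> V -> V) (D : (V -> V) -> (V -> V)) : Prop :=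
  [/\ (forall phi, homlie br phi -> homlie br (D phi)),
      (forall (a : K) phi psi, homlie br phi -> homlie br psi ->
         D (fun v => a *: phi v + psi v) = (fun v => a *: D phi v + D psi v)) &
      (forall phi psi, homlie br phi -> homlie br psi ->
         D (jprod phi psi) = (fun v => jprod (D phi) psi v + jprod phi (D psi) v))].

(* L is isomorphic to a Lie subalgebra of Der(HomLie(L), * ) (bracket = commutator):
   an injective Lie algebra homomorphism f from L to the derivations, where
   derivations are compared by their values on HomLie(L). *)
Definition embeds_in_homlie_der (br : V -> V -> V) : Prop :=
  exists f : V -> (V -> V) -> (V -> V),
    [/\ (forall x, homlie_jordan_der br (f x)),
        (forall (a : K) x y phi, homlie br phi ->
           f (a *: x + y) phi = (fun v => a *: f x phi v + f y phi v)),
        (forall x y phi, homlie br phi ->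
           f (br x y) phi = (fun v => f x (f y phi) v - f y (f x phi) v)) &
        (forall x y, (forall phi, homlie br phi -> f x phi = f y phi) -> x = y)].

End LieDefs.

(* Main.v *)
Require Import Defs.
From mathcomp Require Import all_boot all_algebra.
From mathcomp Require Import ssrAC.
From Stdlib Require Import FunctionalExtensionality.
Set Implicit Arguments. Unset Strict Implicit. Unset Printing Implicit Defensive.
Import GRing.Theory.
Local Open Scope ring_scope.

Lemma lin0 (K : fieldType) (V : lmodType K) (f : V -> V) : is_lin f -> f 0 = 0.
Proof.
move=> H; have := H 1 0 0; rewrite !scale1r addr0 => E.
by apply: (addrI (f 0)); rewrite addr0 -E.
Qed.

Lemma linD (K : fieldType) (V : lmodType K) (f : V -> V) u v : is_lin f -> f (u + v) = f u + f v.
Proof. by move=> H; have := H 1 u v; rewrite !scale1r. Qed.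

Lemma linZ (K : fieldType) (V : lmodType K) (f : V -> V) a u : is_lin f -> f (a *: u) = a *: f u.
Proof. by move=> H; have := H a u 0; rewrite addr0 (lin0 H) addr0. Qed.

Lemma linN (K : fieldType) (V : lmodType K) (f : V -> V) u : is_lin f -> f (- u) = - f u.
Proof. by move=> H; rewrite -scaleN1r linZ // scaleN1r. Qed.

Lemma linB (K : fieldType) (V : lmodType K) (f : V -> V) u v : is_lin f -> f (u - v) = f u - f v.
Proof. by move=> H; rewrite linD // linN. Qed.

Lemma linL (K : fieldType) (V : lmodType K) (br : V -> V -> V) z :
  lie_algebra br -> is_lin (fun x => br x z).
Proof. by case=> H1 _ _ _ a x y; apply: H1. Qed.

Lemma linR (K : fieldType) (V : lmodType K) (br : V -> V -> V) z :
  lie_algebra br -> is_lin (br z).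
Proof. by case=> _ H2 _ _ a x y; apply: H2. Qed.

Lemma brC (K : fieldType) (V : lmodType K) (br : V -> V -> V) u w :
  lie_algebra br -> br u w = - br w u.
Proof.
move=> Hl; have := Hl; case=> _ _ H0 _.
have := H0 (u + w).
rewrite (linD _ _ (linL _ Hl)) !(linD _ _ (linR _ Hl)) !H0 add0r addr0.
by move/eqP; rewrite addr_eq0 => /eqP.
Qed.

Lemma brbr (K : fieldType) (V : lmodType K) (br : V -> V -> V) x y w :
  lie_algebra br -> br (br x y) w = br x (br y w) - br y (br x w).
Proof.
move=> Hl; have := Hl; case=> _ _ _ J.
have := J x y w.
rewrite (brC w (br x y) Hl) (brC w x Hl) (linN _ (linR y Hl)).
by move/eqP; rewrite subr_eq0 => /eqP <-.
Qed.

Lemma brder (K : fieldType) (V : lmodType K) (br : V -> V -> V) a u w :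
  lie_algebra br -> br a (br u w) = br (br a u) w + br u (br a w).
Proof. by move=> Hl; rewrite (brbr _ _ _ Hl) subrK. Qed.

Lemma brDl (K : fieldType) (V : lmodType K) (br : V -> V -> V) x y z :
  lie_algebra br -> br (x + y) z = br x z + br y z.
Proof. by move=> Hl; apply: (linD (f := fun x => br x z)); apply: linL. Qed.
Lemma brZl (K : fieldType) (V : lmodType K) (br : V -> V -> V) a x z :
  lie_algebra br -> br (a *: x) z = a *: br x z.
Proof. by move=> Hl; apply: (linZ (f := fun x => br x z)); apply: linL. Qed.
Lemma brNl (K : fieldType) (V : lmodType K) (br : V -> V -> V) x z :
  lie_algebra br -> br (- x) z = - br x z.
Proof. by move=> Hl; apply: (linN (f := fun x => br x z)); apply: linL. Qed.
Lemma brBl (K : fieldType) (V : lmodType K) (br : V -> V -> V) x y z :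
  lie_algebra br -> br (x - y) z = br x z - br y z.
Proof. by move=> Hl; apply: (linB (f := fun x => br x z)); apply: linL. Qed.
Lemma br0l (K : fieldType) (V : lmodType K) (br : V -> V -> V) z :
  lie_algebra br -> br 0 z = 0.
Proof. by move=> Hl; apply: (lin0 (f := fun x => br x z)); apply: linL. Qed.
Lemma brDr (K : fieldType) (V : lmodType K) (br : V -> V -> V) x y z :
  lie_algebra br -> br z (x + y) = br z x + br z y.
Proof. by move=> Hl; apply: linD; apply: linR. Qed.
Lemma brZr (K : fieldType) (V : lmodType K) (br : V -> V -> V) a x z :
  lie_algebra br -> br z (a *: x) = a *: br z x.
Proof. by move=> Hl; apply: linZ; apply: linR. Qed.
Lemma brNr (K : fieldType) (V : lmodType K) (br : V -> V -> V) x z :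
  lie_algebra br -> br z (- x) = - br z x.
Proof. by move=> Hl; apply: linN; apply: linR. Qed.
Lemma brBr (K : fieldType) (V : lmodType K) (br : V -> V -> V) x y z :
  lie_algebra br -> br z (x - y) = br z x - br z y.
Proof. by move=> Hl; apply: linB; apply: linR. Qed.
Lemma br0r (K : fieldType) (V : lmodType K) (br : V -> V -> V) z :
  lie_algebra br -> br z 0 = 0.
Proof. by move=> Hl; apply: lin0; apply: linR. Qed.

Lemma der2 (K : fieldType) (V : lmodType K) (br : V -> V -> V) a u w :
  lie_algebra br -> br u (br a w) = br a (br u w) - br (br a u) w.
Proof. by move=> Hl; rewrite (brder a u w Hl) addrC addKr. Qed.

Lemma ac12 (V : zmodType) (A1 B1 C1 E1 A2 B2 C2 E2 A3 B3 C3 E3 : V) :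
  A1 - B1 - C1 - E1 + A2 - B2 - C2 - E2 + A3 - B3 - C3 - E3 =
  A1 + A2 + A3 - B1 - C2 - E3 - C1 - E2 - B3 - E1 - B2 - C3.
Proof. by rewrite [LHS](ACl (1*5*9*2*7*12*3*8*10*4*6*11)). Qed.

Lemma ad_homlie (K : fieldType) (V : lmodType K) (br : V -> V -> V) a phi :
  lie_algebra br -> homlie br phi ->
  homlie br (fun v => br a (phi v) - phi (br a v)).
Proof.
move=> Hl [Hlin Hphi]; split.
  move=> c u w /=.
  rewrite Hlin (brDr _ _ _ Hl) (brZr _ _ _ Hl).
  rewrite (brDr _ _ _ Hl) (brZr _ _ _ Hl) (linD _ _ Hlin) (linZ _ _ Hlin).
  by rewrite scalerBr opprD addrACA.
move=> x y z /=.
have HT := Hphi x y z.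
have H1 := Hphi (br a x) y z.
have H2 := Hphi x (br a y) z.
have H3 := Hphi x y (br a z).
transitivity (br a (br (br x y) (phi z) + br (br z x) (phi y) + br (br y z) (phi x))
  - (br (br (br a x) y) (phi z) + br (br z (br a x)) (phi y) + br (br y z) (phi (br a x)))
  - (br (br x (br a y)) (phi z) + br (br z x) (phi (br a y)) + br (br (br a y) z) (phi x))
  - (br (br x y) (phi (br a z)) + br (br (br a z) x) (phi y) + br (br y (br a z)) (phi x))); last first.
  by rewrite HT H1 H2 H3 (br0r _ Hl) !subr0.
rewrite !(brBr _ _ _ Hl) !(brDr _ _ _ Hl).
rewrite (der2 a (br x y) (phi z) Hl) (der2 a (br z x) (phi y) Hl) (der2 a (br y z) (phi x) Hl).
rewrite (brder a x y Hl) (brder a z x Hl) (brder a y z Hl) !(brDl _ _ _ Hl).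
rewrite !opprD ?opprK !addrA.
exact: ac12.
Qed.

Definition adc (V : zmodType) (br : V -> V -> V) (x : V) (phi : V -> V) : V -> V :=
  fun v => br x (phi v) - phi (br x v).

Lemma adc_br (K : fieldType) (V : lmodType K) (br : V -> V -> V) x y phi :
  lie_algebra br -> is_lin phi ->
  adc br (br x y) phi = (fun v => adc br x (adc br y phi) v - adc br y (adc br x phi) v).
Proof.
move=> Hl Hlin; apply: functional_extensionality => v; rewrite /adc.
rewrite (brbr x y (phi v) Hl) (brbr x y v Hl) (linB _ _ Hlin).
rewrite !(brBr _ _ _ Hl) ?(linB _ _ Hlin) !opprD ?opprK !addrA.
rewrite [RHS](ACl (1*5*8*4*(2*7)*(3*6))) /=.
by rewrite addNr addr0 addNr addr0.
Qed.

Lemma adc_jprod (K : fieldType) (V : lmodType K) (br : V -> V -> V) x phi psi :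
  lie_algebra br -> is_lin phi -> is_lin psi ->
  adc br x (jprod phi psi) = (fun v => jprod (adc br x phi) psi v + jprod phi (adc br x psi) v).
Proof.
move=> Hl Hphi Hpsi; apply: functional_extensionality => v; rewrite /adc /jprod /=.
rewrite (brZr _ _ _ Hl) (brDr _ _ _ Hl) (linB _ _ Hpsi) (linB _ _ Hphi) -scalerBr -scalerDr.
congr (_ *: _).
rewrite !opprD ?opprK !addrA.
rewrite [RHS](ACl (1*7*6*4*(2*5)*(3*8))) /=.
by rewrite addNr addr0 subrr addr0.
Qed.

Lemma adc_linphi (K : fieldType) (V : lmodType K) (br : V -> V -> V) x a phi psi :
  lie_algebra br ->
  adc br x (fun v => a *: phi v + psi v) = (fun v => a *: adc br x phi v + adc br x psi v).
Proof.
move=> Hl; apply: functional_extensionality => v; rewrite /adc /=.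
by rewrite (brDr _ _ _ Hl) (brZr _ _ _ Hl) scalerBr opprD addrACA.
Qed.

Lemma adc_linx (K : fieldType) (V : lmodType K) (br : V -> V -> V) a x y phi :
  lie_algebra br -> is_lin phi ->
  adc br (a *: x + y) phi = (fun v => a *: adc br x phi v + adc br y phi v).
Proof.
move=> Hl Hphi; apply: functional_extensionality => v; rewrite /adc /=.
rewrite !(brDl _ _ _ Hl) !(brZl _ _ _ Hl) (linD _ _ Hphi) (linZ _ _ Hphi).
by rewrite scalerBr opprD addrACA.
Qed.

Lemma sub_lem (V : zmodType) (a c n d : V) : a - c = n - d -> n - a = d - c.
Proof.
move/eqP; rewrite subr_eq => /eqP ->.
by rewrite opprD opprB addrA (addrC n) subrK.
Qed.
Lemma sub_lem2 (V : zmodType) (a b c d : V) : a - b = c - d -> - c + a = - d + b.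
Proof.
move/eqP; rewrite subr_eq => /eqP ->.
by rewrite addrA addKr.
Qed.

Theorem corollary2p7 (K : fieldType) (V : lmodType K) (br : V -> V -> V) :
  (2%:R : K) != 0 ->
  simple_lie br ->
  (forall phi psi, homlie br phi -> homlie br psi -> homlie br (jprod phi psi)) ->
  (forall phi, homlie br phi <-> centroid br phi) \/ embeds_in_homlie_der br.
Proof.
move=> _ [Hl Hna Hsimp] _.
pose I := fun x => forall phi, homlie br phi -> forall v, br x (phi v) = phi (br x v).
have HI : lie_ideal br I.
  split.
  - by move=> phi [Hlin _] v; rewrite (br0l _ Hl) (br0l _ Hl) (lin0 Hlin).
  - move=> a x y Ix Iy phi Hphi v.
    rewrite !(brDl _ _ _ Hl) !(brZl _ _ _ Hl) (Ix _ Hphi) (Iy _ Hphi).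
    by rewrite (linD _ _ Hphi.1) (linZ _ _ Hphi.1).
  - move=> x y Ix phi Hphi v.
    have E := Ix _ (ad_homlie y Hl Hphi) v; rewrite /= in E.
    rewrite (brBr _ _ _ Hl) (Ix _ Hphi (br y v)) in E.
    rewrite !(brbr _ _ _ Hl) (linB _ _ Hphi.1) (Ix _ Hphi v).
    exact: sub_lem.
case: (Hsimp I HI) => [Hz | Hall].
  right; exists (adc br); split.
  - move=> x; split.
    + by move=> phi Hphi; apply: ad_homlie.
    + by move=> a phi psi _ _; apply: adc_linphi.
    + by move=> phi psi Hphi Hpsi; apply: adc_jprod => //; [exact: Hphi.1 | exact: Hpsi.1].
  - by move=> a x y phi Hphi; apply: adc_linx => //; exact: Hphi.1.
  - by move=> x y phi Hphi; apply: adc_br => //; exact: Hphi.1.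
  - move=> x y Heq.
    have : I ((-1) *: y + x).
      move=> phi Hphi v.
      have := congr1 (fun f => f v) (Heq phi Hphi); rewrite /adc /= => E.
      rewrite !(brDl _ _ _ Hl) !(brZl _ _ _ Hl) (linD _ _ Hphi.1) (linZ _ _ Hphi.1) !scaleN1r.
      exact: sub_lem2.
    move/Hz/eqP; rewrite scaleN1r addrC subr_eq0 => /eqP.
    done.
left=> phi; split.
  move=> Hphi; split; first exact: Hphi.1.
  move=> x y; have E := Hall y phi Hphi x.
  by rewrite (brC x y Hl) (linN _ Hphi.1) -E (brC y (phi x) Hl) opprK.
move=> [Hlin Hc]; split => // x y z.
rewrite (brC (br x y) (phi z) Hl) (brC (br z x) (phi y) Hl) (brC (br y z) (phi x) Hl) -!Hc.
have J : br x (br y z) + br y (br z x) + br z (br x y) = 0 by case: Hl.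
rewrite -!(linN _ Hlin) -!(linD _ _ Hlin).
have -> : - br z (br x y) + - br y (br z x) + - br x (br y z) =
          - (br x (br y z) + br y (br z x) + br z (br x y)).
  by rewrite !opprD [RHS](ACl (3*2*1)) /=.
by rewrite J oppr0 (lin0 Hlin).
Qed.
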